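(* In the game $\mathcal{B}_0(120,6)$, no pure strategy is weakly dominated by another pure strategy.
   Context: Fix integers $N\ge1$, $K\ge2$ and a real number $\alpha$. The Colonel Blotto game $\mathcal{B}_\alpha(N,K)$ is the two-player simultaneous-move game with players $A,B$, each with pure strategy set $S=\{s\in\{0,1,\ldots,N\}^K:\sum_{k=1}^K s_k=N\}$, in which the payoff of player $i$ at the pure profile $(s^i,s^{-i})$ is $\pi^i(s^i,s^{-i})=\sum_{k=1}^K\big(\mathbf 1[s^i_k>s^{-i}_k]+\tfrac{\alpha}{2}\mathbf 1[s^i_k=s^{-i}_k]\big)$. A pure strategy $s\in S$ is weakly dominated by a pure strategy $\hat s\in S$ if $\pi^i(s,t)\le\pi^i(\hat s,t)$ for all $t\in S$ and $\pi^i(s,t)<\pi^i(\hat s,t)$ for at least one $t\in S$. *)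

(* Defs.v *)
From mathcomp Require Import all_boot all_order all_algebra.
Unset Printing Implicit Defensive.
Import Order.TTheory GRing.Theory Num.Theory.
Local Open Scope ring_scope.

(* Colonel Blotto game B_alpha(N,K).  A pure strategy is an allocation
   s : 'I_K -> {0,...,N} (represented as 'I_N.+1) with total sum N. *)

Definition blotto_strategy (N K : nat) : pred {ffun 'I_K -> 'I_N.+1} :=
  fun s => (\sum_(k < K) (s k : nat))%N == N.

Definition blotto_payoff (N K : nat) (alpha : rat)
    (s t : {ffun 'I_K -> 'I_N.+1}) : rat :=
  \sum_(k < K) (((t k : nat) < s k)%N%:R + alpha / 2 * (s k == t k)%:R).

Definition weakly_dominated_by (N K : nat) (alpha : rat)
    (s shat : {ffun 'I_K -> 'I_N.+1}) : Prop :=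
  (forall t, blotto_strategy N K t ->
     blotto_payoff N K alpha s t <= blotto_payoff N K alpha shat t) /\
  (exists2 t, blotto_strategy N K t &
     blotto_payoff N K alpha s t < blotto_payoff N K alpha shat t).

(* Main.v *)
Require Import Defs.
From mathcomp Require Import all_boot all_order all_algebra.
Import Order.TTheory GRing.Theory Num.Theory.

Lemma payoff_self (s : {ffun 'I_6 -> 'I_121}) :
  blotto_payoff 120 6 0%R s s = 0%R.
Proof.
rewrite /blotto_payoff; apply: big1 => k _.
by rewrite ltnn mul0r addr0.
Qed.

Theorem corollary3 :
  forall s shat : {ffun 'I_6 -> 'I_121},
    blotto_strategy 120 6 s -> blotto_strategy 120 6 shat ->
    ~ weakly_dominated_by 120 6 0%R s shat.
Proof.
move=> s shat Hs Hh [Hle [t Ht Hlt]].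
have H0 := Hle shat Hh.
rewrite payoff_self in H0.
have Hz : blotto_payoff 120 6 0%R s shat = 0%R.
  apply/eqP; rewrite eq_le H0 /=.
  rewrite /blotto_payoff sumr_ge0 // => k _.
  by rewrite mul0r addr0 ler0n.
have Hk : forall k, (s k <= shat k)%N.
  move=> k.
  move: Hz; rewrite /blotto_payoff => /psumr_eq0P H.
  have H' : forall i : 'I_6, true -> (0 <= ((shat i < s i)%N%:R + 0 / 2 * (s i == shat i)%:R : rat))%R.
    by move=> i _; rewrite mul0r addr0 ler0n.
  have := H H' k isT; rewrite mul0r addr0 => /eqP.
  by rewrite pnatr_eq0 eqb0 -leqNgt.
have Hsum : (\sum_(k < 6) (shat k - s k) = 0)%N.
  rewrite sumnB; last by move=> i _; apply: Hk.
  by rewrite (eqP Hs) (eqP Hh) subnn.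
have Heq : s = shat.
  apply/ffunP => k; apply: val_inj => /=.
  apply/eqP; rewrite eqn_leq Hk /=.
  have : (shat k - s k <= \sum_(k < 6) (shat k - s k))%N.
    by rewrite (bigD1 k) //= leq_addr.
  rewrite Hsum.
  by rewrite leqn0 subn_eq0.
by rewrite Heq ltxx in Hlt.
Qed.
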